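(* Let $g>0$ and let $\hat\tau$ be a $\widehat{\mathbb{Z}}$-tropical type of genus $g$ inducing essential types, with $k_{\hat\tau}=b_1(\Gamma)+2\sum_{v\in V_+}g_v-|V_+|$. Then $k_{\hat\tau}=2g-1$ if and only if $\Gamma$ consists of a single internal vertex of genus $g$ together with some number (possibly zero) of external vertices of genus $0$, each joined to the internal vertex by a single edge.
   Context: A $\widehat{\mathbb{Z}}$-tropical type $\hat\tau$ consists of a graph $\Gamma$ (vertices $V$, edges $E$, $n$ legs) with genera $g_v\ge0$ satisfying $\sum_vg_v+b_1(\Gamma)=g$, degrees $d_v\in\mathbb{Z}$, a partition $V=V_0\sqcup V_+$ into external and internal vertices, and slopes $m_{\vec e}=-m_{\overleftarrow e}\in\widehat{\mathbb{Z}}$ satisfying balancing $d_v=\sum_{e\ni v}m_{\vec e}+\sum_{\text{legs }i\text{ at }v}c_i$ in $\widehat{\mathbb{Z}}$. It induces essential types if every edge joins a vertex of $V_0$ to a vertex of $V_+$ and every $v\in V_+$ has $g_v>0$. *)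

(* Defs.v *)
From HB Require Import structures.
From mathcomp Require Import all_boot all_order all_algebra.
Set Implicit Arguments. Unset Strict Implicit. Unset Printing Implicit Defensive.
Import Order.TTheory GRing.Theory Num.Theory.
Local Open Scope ring_scope.

(* A (multi)graph Gamma: finite vertex set V, finite edge set E; every edge e
   carries a chosen orientation src e -> tgt e (loops allowed: src e = tgt e). *)
Section Graph.
Variables (V E : finType) (src tgt : E -> V).

Definition incident (e : E) (v : V) : bool := (src e == v) || (tgt e == v).

Definition adj : rel V := fun u w =>
  [exists e, ((src e == u) && (tgt e == w)) || ((src e == w) && (tgt e == u))].

Definition graph_connected : bool :=
  (0 < #|V|)%N && [forall u, [forall w, connect adj u w]].

Definition betti1 : nat := (#|E| + 1 - #|V|)%N.

(* The slopes/degrees live in a ring Zh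
   (Zhat in the paper); m e is the slope of the oriented edge src e -> tgt e,
   the slope of the reversed orientation being - m e. *)
Definition is_tropical_type (Zh : comNzRingType) (g n : nat)
  (gv : V -> nat) (d : V -> int) (legv : 'I_n -> V) (c : 'I_n -> int)
  (m : E -> Zh) : Prop :=
  [/\ graph_connected,
      (\sum_(v : V) gv v + betti1)%N = g &
      forall v : V,
        (d v)%:~R = \sum_(e | src e == v) m e - \sum_(e | tgt e == v) m e
                    + \sum_(i | legv i == v) (c i)%:~R ].

(* Vp is the set V_+ of internal vertices; V_0 is its complement. *)
Definition induces_essential (Vp : {set V}) (gv : V -> nat) : Prop :=
  (forall e : E, (src e \in Vp) != (tgt e \in Vp)) /\
  (forall v, v \in Vp -> (0 < gv v)%N).

Definition k_tau (Vp : {set V}) (gv : V -> nat) : int :=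
  (betti1 + 2 * \sum_(v in Vp) gv v)%N%:Z - (#|Vp|)%:Z.

Definition star_shaped (g : nat) (Vp : {set V}) (gv : V -> nat) : Prop :=
  exists v0 : V,
    [/\ Vp = [set v0], gv v0 = g,
        forall w, w != v0 -> gv w = 0%N /\ #|[set e | incident e w]| = 1%N &
        forall e, incident e v0 && (src e != tgt e)].

End Graph.

(* Main.v *)
Require Import Defs.
From mathcomp Require Import all_boot all_order all_algebra.
From mathcomp Require Import zify.
Set Implicit Arguments. Unset Strict Implicit. Unset Printing Implicit Defensive.

Lemma k_tauE (V E : finType) (Vp : {set V}) (gv : V -> nat) g :
  (k_tau E Vp gv = (2 * g)%:Z - 1)%R <->
  (betti1 V E + 2 * \sum_(v in Vp) gv v + 1 = 2 * g + #|Vp|)%N.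
Proof.
rewrite /k_tau; set b := betti1 V E; set S := (\sum_(v in Vp) gv v)%N.
split=> H; lia.
Qed.

Theorem lemma3p5p6 (Zh : comNzRingType) (V E : finType) (src tgt : E -> V)
  (n g : nat) (Vp : {set V}) (gv : V -> nat) (d : V -> int)
  (legv : 'I_n -> V) (c : 'I_n -> int) (m : E -> Zh) :
  (0 < g)%N ->
  is_tropical_type src tgt g gv d legv c m ->
  induces_essential src tgt Vp gv ->
  (k_tau E Vp gv = (2 * g)%:Z - 1)%R <-> star_shaped src tgt g Vp gv.
Proof.
move=> g0 [conn Hg _] [ess pos]; rewrite k_tauE.
split.
- move=> H.
  have Sp : (#|Vp| <= \sum_(v in Vp) gv v)%N.
    by rewrite -sum1_card; apply: leq_sum => v /pos.
  have hS : (\sum_v gv v = \sum_(v in Vp) gv v + \sum_(v | v \notin Vp) gv v)%N.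
    by rewrite [LHS](bigID (fun v => v \in Vp)).
  have [hb0 hm] : betti1 V E + #|Vp| = 1%N /\ (\sum_(v | v \notin Vp) gv v = 0)%N.
    by lia.
  have V0 : (0 < #|V|)%N by case/andP: conn.
  case Hp: #|Vp| hb0 => [|[|k]] hb0; last by lia.
    exfalso.
    have Vp0 : Vp = set0 by apply/eqP; rewrite -cards_eq0 Hp.
    have cE : #|E| = 0%N.
      apply: eq_card0 => e; have := ess e; by rewrite Vp0 !inE.
    move: hb0; rewrite addn0 /betti1 cE; lia.
  rewrite addn1 in hb0; move/eqP: hb0 => /eqP hb0.
  have hb : betti1 V E = 0%N by lia.
  have /eqP/cards1P [v0 Vp1] := Hp.
  have he e : (src e == v0) != (tgt e == v0).
    by have := ess e; rewrite Vp1 !inE.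
  pose f e := if src e == v0 then tgt e else src e.
  have fv0 e : f e != v0.
    have := he e; rewrite /f.
    by case: (src e =P v0) => [_|/eqP ?]; case: (tgt e =P v0) => [_|/eqP ?].
  have inc e : incident src tgt e (f e).
    by rewrite /incident /f; case: (src e == v0); rewrite eqxx ?orbT.
  have incf e w : w != v0 -> incident src tgt e w -> f e = w.
    move=> wv0 /orP [] /eqP Ew; rewrite /f; subst w.
      by rewrite (negbTE wv0).
    by have := he e; rewrite (negbTE wv0); case: (src e =P v0).
  have surj w : w != v0 -> exists e, f e = w.
    move=> wv0; case/andP: conn => _ /forallP /(_ w) /forallP /(_ v0).
    case/connectP => [[|y p]] /=; first by move=> _ E0; rewrite E0 eqxx in wv0.
    case/andP => /existsP [e] /orP [] /andP [] /eqP A /eqP B _ _; exists e.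
      by apply: incf => //; rewrite /incident A eqxx.
    by apply: incf => //; rewrite /incident B eqxx orbT.
  have img : [set f e | e in E] = [set~ v0].
    apply/eqP; rewrite eqEsubset; apply/andP; split.
      by apply/subsetP => x /imsetP [e _ ->]; rewrite !inE fv0.
    apply/subsetP => x; rewrite !inE => /surj [e <-].
    by apply/imsetP; exists e.
  have finj : {in E &, injective f}.
    apply/imset_injP; rewrite img cardsC1 eqn_leq; apply/andP; split.
      by have := leq_imset_card f E; rewrite img cardsC1.
    move: hb V0; rewrite /betti1 => h0 h1; rewrite -(prednK h1) in h0.
    by move: h0; rewrite addn1 subSS => /eqP; rewrite subn_eq0.
  exists v0; split => //.
  + move: Hg; rewrite hS hm hb Vp1 big_set1; lia.
  + move=> w wv0; split.
      move/eqP: hm; rewrite sum_nat_eq0 => /forallP /(_ w); rewrite Vp1 !inE wv0.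
      by move/eqP.
    have [e0 fe0] := surj w wv0.
    apply/eqP/cards1P; exists e0; apply/setP => e; rewrite !inE.
    apply/idP/idP.
      move=> /(incf _ _ wv0) fe; apply/eqP; apply: finj => //; by rewrite fe.
    by move/eqP ->; rewrite -fe0.
  + move=> e; have := he e; rewrite /incident.
    case: (src e =P v0) => [Es|/eqP Ns]; case: (tgt e =P v0) => [Et|/eqP Nt] //= _.
      by rewrite Es eq_sym.
    by rewrite Et.
- case=> v0 [-> gv0 Hw He].
  have Hb : betti1 V E = 0%N.
    pose f e := if src e == v0 then tgt e else src e.
    have fv0 e : f e != v0.
      rewrite /f; have := He e; rewrite /incident => /andP [] /orP [] /eqP.
        by move=> ->; rewrite eqxx /= eq_sym; apply.
      by move=> -> H; rewrite (negbTE H).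
    have finj : injective f.
      move=> e1 e2 fe.
      have inc e : incident src tgt e (f e).
        by rewrite /incident /f; case: (src e == v0); rewrite eqxx ?orbT.
      have h1 := inc e1; have h2 := inc e2; rewrite -fe in h2.
      have := (Hw _ (fv0 e1)).2 => /eqP/cards1P [e0 E0].
      have m1 : e1 \in [set e | incident src tgt e (f e1)] by rewrite inE.
      have m2 : e2 \in [set e | incident src tgt e (f e1)] by rewrite inE.
      by move: m1 m2; rewrite E0 !inE => /eqP -> /eqP ->.
    have : (#|[set f e | e in E]| <= #|[set~ v0]|)%N.
      apply: subset_leq_card; apply/subsetP=> x /imsetP [e _ ->].
      by rewrite !inE fv0.
    rewrite (card_imset _ finj) cardsC1 /betti1.
    have : (0 < #|V|)%N by apply/card_gt0P; exists v0.
    by move=> h0 h1; apply/eqP; rewrite subn_eq0 -(prednK h0) addn1 ltnS.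
  rewrite Hb big_set1 gv0 cards1; lia.
Qed.
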